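(* In the setting below, suppose the graph $\mathcal G_{el}$ is connected and for every $i\in\mathcal D$ the gains satisfy $k^C_{1,i}<1$, $k^C_{2,i}<R^C_{ti}$, $k^C_{3,i}>0$. Then the origin of the linear system $\dot{\mathbf x}=\mathbf F^C\mathbf x$, $\mathbf x\in\mathbb{R}^{3N}$, is asymptotically stable.
   Context: Let $N\ge1$, $\mathcal D=\{1,\dots,N\}$, $\mathcal G_{el}$ an undirected graph on $\mathcal D$ with neighbor sets $\mathcal N_i$; for each $i$ let $C_{ti},L^C_{ti},R^C_{ti},R_{Li}>0$, and for each edge $R_{ij}=R_{ji}>0$. Let $e_1=(1,0,0)^T$, $F_i^C=\begin{bmatrix}0&\frac{1}{C_{ti}}&0\\ \frac{k^C_{1,i}-1}{L^C_{ti}}&\frac{k^C_{2,i}-R^C_{ti}}{L^C_{ti}}&\frac{k^C_{3,i}}{L^C_{ti}}\\ 0&-1&0\end{bmatrix}$. $\mathbf F^C\in\mathbb{R}^{3N\times3N}$ has $(i,i)$ block $F_i^C-\Big(\frac{1}{R_{Li}C_{ti}}+\sum_{j\in\mathcal N_i}\frac{1}{R_{ij}C_{ti}}\Big)e_1e_1^T$ and $(i,j)$ block ($j\neq i$) equal to $\frac{1}{R_{ij}C_{ti}}e_1e_1^T$ if $j\in\mathcal N_i$, $0$ otherwise. (This is the closed-loop dynamics of $N$ current-controlled converter units with PI-type state feedback, with exogenous inputs set to zero.) *)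

(* Defs.v *)
From Stdlib Require Import Reals Lra Lia.
Open Scope R_scope.

Fixpoint sumR (n : nat) (f : nat -> R) : R :=
  match n with
  | O => 0
  | S m => sumR m f + f m
  end.

Definition vnorm (n : nat) (v : nat -> R) : R :=
  sqrt (sumR n (fun k => v k ^ 2)).

Definition is_solution (n : nat) (A : nat -> nat -> R) (x : R -> nat -> R) : Prop :=
  forall k, (k < n)%nat -> forall t : R,
    derivable_pt_lim (fun s => x s k) t (sumR n (fun l => A k l * x t l)).

Definition asymptotically_stable (n : nat) (A : nat -> nat -> R) : Prop :=
  (forall eps, 0 < eps -> exists delta, 0 < delta /\
     forall x, is_solution n A x -> vnorm n (x 0) < delta ->
       forall t, 0 <= t -> vnorm n (x t) < eps)
  /\
  (exists delta, 0 < delta /\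
     forall x, is_solution n A x -> vnorm n (x 0) < delta ->
       forall eps, 0 < eps -> exists T, forall t, T <= t -> vnorm n (x t) < eps).

Definition simple_graph (N : nat) (adj : nat -> nat -> bool) : Prop :=
  (forall i j, adj i j = adj j i) /\
  (forall i, adj i i = false) /\
  (forall i j, adj i j = true -> (i < N)%nat /\ (j < N)%nat).

Inductive reach (adj : nat -> nat -> bool) : nat -> nat -> Prop :=
  | reach_refl : forall i, reach adj i i
  | reach_step : forall i j k, adj i j = true -> reach adj j k -> reach adj i k.

Definition connected (N : nat) (adj : nat -> nat -> bool) : Prop :=
  forall i j, (i < N)%nat -> (j < N)%nat -> reach adj i j.

Definition FCi (C L Rc k1 k2 k3 : R) (a b : nat) : R :=
  match a, b with
  | 0%nat, 1%nat => 1 / C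
  | 1%nat, 0%nat => (k1 - 1) / L
  | 1%nat, 1%nat => (k2 - Rc) / L
  | 1%nat, 2%nat => k3 / L
  | 2%nat, 1%nat => -1
  | _, _ => 0
  end.

Definition e11 (a b : nat) : R :=
  match a, b with 0%nat, 0%nat => 1 | _, _ => 0 end.

Definition FCblock (N : nat) (adj : nat -> nat -> bool)
  (Ct Lt Rt RL : nat -> R) (Rl : nat -> nat -> R) (k1 k2 k3 : nat -> R)
  (i j a b : nat) : R :=
  if Nat.eqb i j then
    FCi (Ct i) (Lt i) (Rt i) (k1 i) (k2 i) (k3 i) a b
    - (1 / (RL i * Ct i)
       + sumR N (fun l => if adj i l then 1 / (Rl i l * Ct i) else 0)) * e11 a b
  else if adj i j then (1 / (Rl i j * Ct i)) * e11 a b else 0.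

(* The 3N x 3N matrix F^C; global index k = 3*i + a (unit i, 0-based, local a). *)
Definition FC (N : nat) (adj : nat -> nat -> bool)
  (Ct Lt Rt RL : nat -> R) (Rl : nat -> nat -> R) (k1 k2 k3 : nat -> R)
  (k l : nat) : R :=
  FCblock N adj Ct Lt Rt RL Rl k1 k2 k3 (k / 3) (l / 3) (k mod 3) (l mod 3).

(* Main.v *)
Require Import Defs.
From Stdlib Require Import Reals Lra Lia.
Open Scope R_scope.

Lemma divmod3 j a : (a < 3)%nat -> ((3*j+a)/3 = j /\ (3*j+a) mod 3 = a)%nat.
Proof. intros H. split; symmetry; [apply (Nat.div_unique _ _ _ a)|apply (Nat.mod_unique _ _ j)]; lia. Qed.

Lemma sumR_ext n f g : (forall i, (i < n)%nat -> f i = g i) -> sumR n f = sumR n g.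
Proof. induction n; simpl; intros H; auto. rewrite IHn by (intros; apply H; lia). rewrite H by lia. auto. Qed.

Lemma sumR_le n f g : (forall i, (i < n)%nat -> f i <= g i) -> sumR n f <= sumR n g.
Proof. induction n; simpl; intros H; [lra|]. assert (sumR n f <= sumR n g) by (apply IHn; intros; apply H; lia). assert (f n <= g n) by (apply H; lia). lra. Qed.

Lemma sumR_plus n f g : sumR n (fun i => f i + g i) = sumR n f + sumR n g.
Proof. induction n; simpl; [lra|]. rewrite IHn. ring. Qed.

Lemma sumR_scal n c f : sumR n (fun i => c * f i) = c * sumR n f.
Proof. induction n; simpl; [ring|]. rewrite IHn. ring. Qed.

Lemma sumR_zero n : sumR n (fun _ => 0) = 0.
Proof. induction n; simpl; [ring|]. rewrite IHn. ring. Qed.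

Lemma sumR_swap n m f : sumR n (fun i => sumR m (fun j => f i j)) = sumR m (fun j => sumR n (fun i => f i j)).
Proof. induction n; simpl. - symmetry; apply sumR_zero. - rewrite IHn. rewrite <- sumR_plus. auto. Qed.

Lemma sum3 n f : sumR (3*n) f = sumR n (fun j => f (3*j)%nat + f (3*j+1)%nat + f (3*j+2)%nat).
Proof. induction n. simpl; auto.
 replace (3 * S n)%nat with (S (S (S (3*n)))) by lia. cbn [sumR]. rewrite IHn.
 replace (3*n+1)%nat with (S (3*n)) by lia. replace (3*n+2)%nat with (S (S (3*n))) by lia. ring. Qed.

Lemma sumR_pick n i A G : (i < n)%nat ->
  sumR n (fun j => if Nat.eqb i j then A j else G j) = A i + sumR n G - G i.
Proof. induction n; intros H; [lia|]. simpl. destruct (Nat.eq_dec i n).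
 - subst. rewrite Nat.eqb_refl. rewrite (sumR_ext n _ G). ring. intros j Hj. destruct (Nat.eqb_spec n j); [lia|auto].
 - rewrite IHn by lia. destruct (Nat.eqb_spec i n); [lia|]. ring. Qed.

Fixpoint minR (n : nat) (g : nat -> R) : R := match n with O => 1 | S m => Rmin (minR m g) (g m) end.
Fixpoint maxR (n : nat) (g : nat -> R) : R := match n with O => 1 | S m => Rmax (maxR m g) (g m) end.

Lemma minR_pos n g : (forall i, (i<n)%nat -> 0 < g i) -> 0 < minR n g.
Proof. induction n; simpl; intros H; [lra|]. apply Rmin_glb_lt; [apply IHn; intros; apply H; lia| apply H; lia]. Qed.
Lemma minR_le n g i : (i < n)%nat -> minR n g <= g i.
Proof. induction n; simpl; intros H; [lia|]. destruct (Nat.eq_dec i n). subst; apply Rmin_r.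
 eapply Rle_trans; [apply Rmin_l| apply IHn; lia]. Qed.
Lemma maxR_pos n g : 0 < maxR n g.
Proof. induction n; simpl; [lra|]. eapply Rlt_le_trans; [apply IHn|apply Rmax_l]. Qed.
Lemma maxR_ge n g i : (i < n)%nat -> g i <= maxR n g.
Proof. induction n; simpl; intros H; [lia|]. destruct (Nat.eq_dec i n). subst; apply Rmax_r.
 eapply Rle_trans; [apply IHn; lia| apply Rmax_l]. Qed.

Lemma dl_eq f x l l' : derivable_pt_lim f x l -> l = l' -> derivable_pt_lim f x l'.
Proof. intros H ->; auto. Qed.
Lemma dmul f g x df dg : derivable_pt_lim f x df -> derivable_pt_lim g x dg ->
  derivable_pt_lim (fun s => f s * g s) x (df * g x + f x * dg).
Proof. intros. exact (derivable_pt_lim_mult f g x df dg H H0). Qed.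
Lemma dplus f g x df dg : derivable_pt_lim f x df -> derivable_pt_lim g x dg ->
  derivable_pt_lim (fun s => f s + g s) x (df + dg).
Proof. intros. exact (derivable_pt_lim_plus f g x df dg H H0). Qed.
Lemma dconst c x : derivable_pt_lim (fun _ => c) x 0.
Proof. exact (derivable_pt_lim_const c x). Qed.
Lemma dsum n F dF t : (forall i, (i < n)%nat -> derivable_pt_lim (F i) t (dF i)) ->
  derivable_pt_lim (fun s => sumR n (fun i => F i s)) t (sumR n dF).
Proof. induction n; intros H; simpl. apply dconst. apply dplus. apply IHn; intros; apply H; lia. apply H; lia. Qed.

Definition epsU (C L Rt RL k1 k2 k3 : R) : R :=
  let a := 1 - k1 in let b := Rt - k2 in
  Rmin (Rmin (k3/(2*(a*a)*RL)) (b/(2*a*(L+b*b/k3)))) (Rmin 1 (k3/(4*(a*a)*L))).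
Definition WU (C L Rt RL k1 k2 k3 : R) v I z :=
  C*(v*v) + L/(1-k1)*(I*I) + k3/(1-k1)*(z*z) - 2*epsU C L Rt RL k1 k2 k3*L*(z*I).
Definition dIU (C L Rt RL k1 k2 k3 : R) v I z := (k1-1)/L*v + (k2-Rt)/L*I + k3/L*z.
Definition QU (C L Rt RL k1 k2 k3 : R) v I z :=
  let dI := dIU C L Rt RL k1 k2 k3 v I z in
  2*C*v*(-(1/(RL*C))*v + 1/C*I) + 2*(L/(1-k1))*I*dI + 2*(k3/(1-k1))*z*(-I)
  - 2*epsU C L Rt RL k1 k2 k3*L*((-I)*I + z*dI).
Definition alphaU (C L Rt RL k1 k2 k3 : R) :=
  Rmin (Rmin C (L/(2*(1-k1)))) (k3/(2*(1-k1))).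
Definition betaU (C L Rt RL k1 k2 k3 : R) :=
  C + L/(1-k1) + k3/(1-k1) + epsU C L Rt RL k1 k2 k3 * L.
Definition cU (C L Rt RL k1 k2 k3 : R) :=
  Rmin (Rmin (1/RL) ((Rt-k2)/(1-k1))) (epsU C L Rt RL k1 k2 k3 * k3).

Section U.
Variables C L Rt RL k1 k2 k3 : R.
Hypotheses (HC : 0 < C) (HL : 0 < L) (HR : 0 < Rt) (HRL : 0 < RL) (H1 : k1 < 1) (H2 : k2 < Rt) (H3 : 0 < k3).

Lemma eps_props : let e := epsU C L Rt RL k1 k2 k3 in let a := 1-k1 in let b := Rt - k2 in
  0 < e /\ e <= k3/(2*(a*a)*RL) /\ e <= b/(2*a*(L+b*b/k3)) /\ e <= 1 /\ e <= k3/(4*(a*a)*L).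
Proof.
  intros e a b. assert (0<a) by (unfold a; lra). assert (0<b) by (unfold b; lra).
  unfold e, epsU. fold a b.
  repeat split.
  - assert (0 < b*b/k3) by (apply Rdiv_lt_0_compat; nra).
    assert (0 < a*a) by nra.
    repeat apply Rmin_glb_lt; try lra; apply Rdiv_lt_0_compat; try lra;
    repeat apply Rmult_lt_0_compat; lra.
  - eapply Rle_trans; apply Rmin_l.
  - eapply Rle_trans; [apply Rmin_l| apply Rmin_r].
  - eapply Rle_trans; [apply Rmin_r| apply Rmin_l].
  - eapply Rle_trans; apply Rmin_r.
Qed.

Lemma unit_bounds : 0 < alphaU C L Rt RL k1 k2 k3 /\ 0 < betaU C L Rt RL k1 k2 k3 /\ 0 < cU C L Rt RL k1 k2 k3 /\
  forall v I z, let n := v^2 + I^2 + z^2 in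
   alphaU C L Rt RL k1 k2 k3 * n <= WU C L Rt RL k1 k2 k3 v I z /\
   WU C L Rt RL k1 k2 k3 v I z <= betaU C L Rt RL k1 k2 k3 * n /\
   QU C L Rt RL k1 k2 k3 v I z <= - cU C L Rt RL k1 k2 k3 * n.
Proof.
  destruct eps_props as (He & E1 & E2 & E3 & E4).
  set (e := epsU C L Rt RL k1 k2 k3) in *.
  set (a := 1 - k1) in *. set (b := Rt - k2) in *.
  assert (Ha : 0 < a) by (unfold a; lra). assert (Hb : 0 < b) by (unfold b; lra).
  assert (Hbk : 0 < b*b/k3) by (apply Rdiv_lt_0_compat; nra).
  assert (Hal : 0 < alphaU C L Rt RL k1 k2 k3).
  { unfold alphaU. fold a. repeat apply Rmin_glb_lt; try lra; apply Rdiv_lt_0_compat; lra. }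
  assert (Hbe : 0 < betaU C L Rt RL k1 k2 k3).
  { unfold betaU. fold a e. assert (0 < L/a) by (apply Rdiv_lt_0_compat; lra).
    assert (0 < k3/a) by (apply Rdiv_lt_0_compat; lra). nra. }
  assert (Hc : 0 < cU C L Rt RL k1 k2 k3).
  { unfold cU. fold a b e. repeat apply Rmin_glb_lt. apply Rdiv_lt_0_compat; lra.
    apply Rdiv_lt_0_compat; lra. nra. }
  split; [exact Hal|]. split; [exact Hbe|]. split; [exact Hc|].
  intros v I z n.
  assert (Hv : 0 <= v*v) by nra. assert (HI : 0 <= I*I) by nra. assert (Hz : 0 <= z*z) by nra.
  assert (Hn : n = v*v + I*I + z*z) by (unfold n; ring).
  assert (HW : WU C L Rt RL k1 k2 k3 v I z = C*(v*v) + L/a*(I*I) + k3/a*(z*z) - 2*e*L*(z*I)).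
  { unfold WU. fold a e. ring. }
  split; [|split].
  -
    assert (Hsq : 0 <= L/(2*a)*((I - 2*e*a*z)*(I - 2*e*a*z))).
    { apply Rmult_le_pos. apply Rlt_le, Rdiv_lt_0_compat; lra. apply Rle_0_sqr. }
    assert (Hexp : L/(2*a)*((I - 2*e*a*z)*(I - 2*e*a*z)) = L/(2*a)*(I*I) - 2*e*L*(z*I) + 2*e*e*a*L*(z*z)).
    { field. lra. }
    assert (Hee : e*e <= e) by nra.
    assert (Hk : 2*e*e*a*L <= k3/(2*a)).
    { assert (0 <= 2*a*L) by nra.
      assert ((e*e)*(2*a*L) <= e*(2*a*L)) by (apply Rmult_le_compat_r; lra).
      assert (e*(2*a*L) <= (k3/(4*(a*a)*L))*(2*a*L)) by (apply Rmult_le_compat_r; lra).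
      assert (2*(k3/(4*(a*a)*L))*a*L = k3/(2*a)) by (field; repeat split; lra). lra. }
    assert (Hk' : 2*e*e*a*L*(z*z) <= k3/(2*a)*(z*z)) by (apply Rmult_le_compat_r; lra).
    assert (HA1 : alphaU C L Rt RL k1 k2 k3 <= C) by (unfold alphaU; eapply Rle_trans; apply Rmin_l).
    assert (HA2 : alphaU C L Rt RL k1 k2 k3 <= L/(2*a)) by (unfold alphaU; fold a; eapply Rle_trans; [apply Rmin_l|apply Rmin_r]).
    assert (HA3 : alphaU C L Rt RL k1 k2 k3 <= k3/(2*a)) by (unfold alphaU; fold a; apply Rmin_r).
    assert (k3/a = k3/(2*a) + k3/(2*a)) by (field; repeat split; lra).
    assert (L/a = L/(2*a) + L/(2*a)) by (field; repeat split; lra).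
    rewrite HW, Hn.
    assert (alphaU C L Rt RL k1 k2 k3 * (v*v) <= C*(v*v)) by (apply Rmult_le_compat_r; lra).
    assert (alphaU C L Rt RL k1 k2 k3 * (I*I) <= L/(2*a)*(I*I)) by (apply Rmult_le_compat_r; lra).
    assert (alphaU C L Rt RL k1 k2 k3 * (z*z) <= k3/(2*a)*(z*z)) by (apply Rmult_le_compat_r; lra).
    assert (k3/a*(z*z) = k3/(2*a)*(z*z) + k3/(2*a)*(z*z)) by (rewrite H; ring).
    assert (L/a*(I*I) = L/(2*a)*(I*I) + L/(2*a)*(I*I)) by (rewrite H0; ring).
    lra.
  -
    assert (Hsq : 0 <= e*L*((z+I)*(z+I))) by (apply Rmult_le_pos; [apply Rlt_le; repeat apply Rmult_lt_0_compat; lra | apply Rle_0_sqr]).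
    unfold betaU. fold a e. rewrite HW, Hn.
    assert (0 < L/a) by (apply Rdiv_lt_0_compat; lra).
    assert (0 < k3/a) by (apply Rdiv_lt_0_compat; lra).
    assert (0 <= e*L) by nra.
    set (B := C + L/a + k3/a + e*L).
    assert (C*(v*v) <= B*(v*v)) by (apply Rmult_le_compat_r; unfold B; lra).
    assert ((L/a + e*L)*(I*I) <= B*(I*I)) by (apply Rmult_le_compat_r; unfold B; lra).
    assert ((k3/a + e*L)*(z*z) <= B*(z*z)) by (apply Rmult_le_compat_r; unfold B; lra).
    nra.
  -
    assert (HQ : QU C L Rt RL k1 k2 k3 v I z =
      -2/RL*(v*v) - 2*(b/a)*(I*I) + 2*e*L*(I*I) + 2*e*a*(z*v) + 2*e*b*(z*I) - 2*e*k3*(z*z)).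
    { unfold QU, dIU. fold e. replace (k1 - 1) with (-a) by (unfold a; ring).
      replace (k2 - Rt) with (-b) by (unfold b; ring). fold a. field. lra. }
    assert (S1 : 0 <= e*k3/2*((z - 2*a*v/k3)*(z - 2*a*v/k3))) by (apply Rmult_le_pos; [apply Rlt_le; repeat apply Rmult_lt_0_compat; lra | apply Rle_0_sqr]).
    assert (S1e : e*k3/2*((z - 2*a*v/k3)*(z - 2*a*v/k3)) = e*k3/2*(z*z) - 2*e*a*(z*v) + 2*e*a*a/k3*(v*v))
      by (field; repeat split; lra).
    assert (S2 : 0 <= e*k3/2*((z - 2*b*I/k3)*(z - 2*b*I/k3))) by (apply Rmult_le_pos; [apply Rlt_le; repeat apply Rmult_lt_0_compat; lra | apply Rle_0_sqr]).
    assert (S2e : e*k3/2*((z - 2*b*I/k3)*(z - 2*b*I/k3)) = e*k3/2*(z*z) - 2*e*b*(z*I) + 2*e*b*b/k3*(I*I))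
      by (field; repeat split; lra).
    assert (C1 : 2*e*a*a/k3 <= 1/RL).
    { assert (0 <= 2*a*a/k3) by (apply Rlt_le, Rdiv_lt_0_compat; nra).
      assert (e * (2*a*a/k3) <= k3/(2*(a*a)*RL) * (2*a*a/k3)) by (apply Rmult_le_compat_r; lra).
      assert (k3/(2*(a*a)*RL) * (2*a*a/k3) = 1/RL) by (field; repeat split; lra).
      assert (2*e*a*a/k3 = e * (2*a*a/k3)) by (field; repeat split; lra). lra. }
    assert (C2 : 2*e*L + 2*e*b*b/k3 <= b/a).
    { assert (0 <= 2*(L + b*b/k3)) by lra.
      assert (e * (2*(L + b*b/k3)) <= b/(2*a*(L+b*b/k3)) * (2*(L + b*b/k3))) by (apply Rmult_le_compat_r; lra).
      assert (b/(2*a*(L+b*b/k3)) * (2*(L + b*b/k3)) = b/a) by (field; repeat split; nra).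
      assert (2*e*L + 2*e*b*b/k3 = e * (2*(L + b*b/k3))) by (field; repeat split; lra). lra. }
    assert (C1' : 2*e*a*a/k3*(v*v) <= 1/RL*(v*v)) by (apply Rmult_le_compat_r; lra).
    assert (C2' : (2*e*L + 2*e*b*b/k3)*(I*I) <= b/a*(I*I)) by (apply Rmult_le_compat_r; lra).
    assert (K1 : cU C L Rt RL k1 k2 k3 <= 1/RL) by (unfold cU; eapply Rle_trans; apply Rmin_l).
    assert (K2 : cU C L Rt RL k1 k2 k3 <= b/a) by (unfold cU; fold a b; eapply Rle_trans; [apply Rmin_l|apply Rmin_r]).
    assert (K3 : cU C L Rt RL k1 k2 k3 <= e*k3) by (unfold cU; fold e; apply Rmin_r).
    assert (cU C L Rt RL k1 k2 k3 * (v*v) <= 1/RL*(v*v)) by (apply Rmult_le_compat_r; lra).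
    assert (cU C L Rt RL k1 k2 k3 * (I*I) <= b/a*(I*I)) by (apply Rmult_le_compat_r; lra).
    assert (cU C L Rt RL k1 k2 k3 * (z*z) <= e*k3*(z*z)) by (apply Rmult_le_compat_r; lra).
    assert (-2/RL*(v*v) = -2*(1/RL*(v*v))) by (field; repeat split; lra).
    rewrite HQ, Hn. lra.
Qed.
End U.

Section Rows.
Variables (N : nat) (adj : nat -> nat -> bool) (Ct Lt Rt RL : nat -> R) (Rl : nat -> nat -> R) (k1 k2 k3 : nat -> R).
Hypothesis Hirr : forall i, adj i i = false.
Variable xs : nat -> R.

Definition rowsum k := sumR (3*N) (fun l => FC N adj Ct Lt Rt RL Rl k1 k2 k3 k l * xs l).
Definition Sdeg i := sumR N (fun l => if adj i l then 1 / (Rl i l * Ct i) else 0).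
Definition Tcpl i := sumR N (fun j => if adj i j then 1 / (Rl i j * Ct i) * xs (3*j)%nat else 0).

Lemma FC_at i j a b : (a < 3)%nat -> (b < 3)%nat ->
  FC N adj Ct Lt Rt RL Rl k1 k2 k3 (3*i+a) (3*j+b) = FCblock N adj Ct Lt Rt RL Rl k1 k2 k3 i j a b.
Proof. intros Ha Hb. unfold FC. destruct (divmod3 i a Ha) as [-> ->]. destruct (divmod3 j b Hb) as [-> ->]. auto. Qed.

Lemma rowsum_blocks i a : (a < 3)%nat -> (i < N)%nat ->
  rowsum (3*i+a) =
   (FCi (Ct i) (Lt i) (Rt i) (k1 i) (k2 i) (k3 i) a 0 - (1/(RL i * Ct i) + Sdeg i) * e11 a 0) * xs (3*i)%nat
 + (FCi (Ct i) (Lt i) (Rt i) (k1 i) (k2 i) (k3 i) a 1 - (1/(RL i * Ct i) + Sdeg i) * e11 a 1) * xs (3*i+1)%nat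
 + (FCi (Ct i) (Lt i) (Rt i) (k1 i) (k2 i) (k3 i) a 2 - (1/(RL i * Ct i) + Sdeg i) * e11 a 2) * xs (3*i+2)%nat
 + sumR N (fun j => (if adj i j then 1/(Rl i j * Ct i) * e11 a 0 else 0) * xs (3*j)%nat
    + (if adj i j then 1/(Rl i j * Ct i) * e11 a 1 else 0) * xs (3*j+1)%nat
    + (if adj i j then 1/(Rl i j * Ct i) * e11 a 2 else 0) * xs (3*j+2)%nat).
Proof.
  intros Ha Hi. unfold rowsum. rewrite sum3.
  set (D := 1/(RL i * Ct i) + Sdeg i).
  set (F := FCi (Ct i) (Lt i) (Rt i) (k1 i) (k2 i) (k3 i)).
  set (G := fun j : nat => (if adj i j then 1/(Rl i j * Ct i) * e11 a 0 else 0) * xs (3*j)%nat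
    + (if adj i j then 1/(Rl i j * Ct i) * e11 a 1 else 0) * xs (3*j+1)%nat
    + (if adj i j then 1/(Rl i j * Ct i) * e11 a 2 else 0) * xs (3*j+2)%nat).
  set (A := fun j : nat => (F a 0%nat - D * e11 a 0) * xs (3*j)%nat + (F a 1%nat - D * e11 a 1) * xs (3*j+1)%nat
    + (F a 2%nat - D * e11 a 2) * xs (3*j+2)%nat).
  rewrite (sumR_ext _ _ (fun j => if Nat.eqb i j then A j else G j)).
  - rewrite sumR_pick by auto. unfold A, G. rewrite Hirr. ring.
  - intros j Hj. replace (3*j)%nat with (3*j+0)%nat at 1 by lia.
    rewrite !FC_at by lia. unfold FCblock. fold (Sdeg i). fold D F.
    replace (3*j+0)%nat with (3*j)%nat by lia.
    unfold A, G. destruct (Nat.eqb i j); reflexivity.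
Qed.

Lemma row0 i : (i < N)%nat ->
  rowsum (3*i) = -(1/(RL i * Ct i) + Sdeg i) * xs (3*i)%nat + 1/Ct i * xs (3*i+1)%nat + Tcpl i.
Proof.
  intros Hi. replace (3*i)%nat with (3*i+0)%nat at 1 by lia. rewrite rowsum_blocks by lia.
  unfold Tcpl. simpl FCi. simpl e11.
  rewrite (sumR_ext _ _ (fun j => if adj i j then 1 / (Rl i j * Ct i) * xs (3*j)%nat else 0)).
  ring. intros j _. destruct (adj i j); ring.
Qed.

Lemma row1 i : (i < N)%nat ->
  rowsum (3*i+1) = (k1 i - 1)/Lt i * xs (3*i)%nat + (k2 i - Rt i)/Lt i * xs (3*i+1)%nat + k3 i/Lt i * xs (3*i+2)%nat.
Proof.
  intros Hi. rewrite rowsum_blocks by lia. simpl FCi. simpl e11.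
  rewrite (sumR_ext _ _ (fun j => 0)). rewrite sumR_zero. ring. intros j _. destruct (adj i j); ring.
Qed.

Lemma row2 i : (i < N)%nat -> rowsum (3*i+2) = - xs (3*i+1)%nat.
Proof.
  intros Hi. rewrite rowsum_blocks by lia. simpl FCi. simpl e11.
  rewrite (sumR_ext _ _ (fun j => 0)). rewrite sumR_zero. ring. intros j _. destruct (adj i j); ring.
Qed.
End Rows.

Lemma sumR_lin2 n c1 c2 f g : sumR n (fun j => c1 * f j + c2 * g j) = c1 * sumR n f + c2 * sumR n g.
Proof. rewrite sumR_plus, !sumR_scal. auto. Qed.

Lemma sumR_nonpos n f : (forall i, (i < n)%nat -> f i <= 0) -> sumR n f <= 0.
Proof. intros H. rewrite <- (sumR_zero n). apply sumR_le. auto. Qed.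

Lemma coupling N adj Ct Rl (xs : nat -> R) :
  simple_graph N adj ->
  (forall i, (i < N)%nat -> 0 < Ct i) ->
  (forall i j, adj i j = true -> 0 < Rl i j /\ Rl i j = Rl j i) ->
  sumR N (fun i => 2 * Ct i * xs (3*i)%nat * (- Sdeg N adj Ct Rl i * xs (3*i)%nat + Tcpl N adj Ct Rl xs i)) <= 0.
Proof.
  intros [Hsym [Hirr Hin]] HC HR.
  set (h := fun i j => if adj i j then 2 * (xs (3*i)%nat * xs (3*j)%nat - xs (3*i)%nat * xs (3*i)%nat) / Rl i j else 0).
  rewrite (sumR_ext _ _ (fun i => sumR N (fun j => h i j))).
  2:{ intros i Hi. unfold Sdeg, Tcpl.
      rewrite Rmult_plus_distr_l.
      replace (2 * Ct i * xs (3 * i)%nat * (- sumR N (fun l => if adj i l then 1 / (Rl i l * Ct i) else 0) * xs (3 * i)%nat))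
        with ((- (2 * Ct i * xs (3 * i)%nat * xs (3*i)%nat)) * sumR N (fun l => if adj i l then 1 / (Rl i l * Ct i) else 0)) by ring.
      rewrite <- sumR_lin2. apply sumR_ext. intros j Hj. unfold h.
      destruct (adj i j) eqn:E; [|ring]. assert (0 < Rl i j) by (apply HR; auto).
      assert (0 < Ct i) by auto. field. lra. }
  set (Sm := sumR N (fun i => sumR N (fun j => h i j))).
  assert (Hs : Sm = sumR N (fun i => sumR N (fun j => h j i))).
  { unfold Sm. rewrite sumR_swap. auto. }
  assert (2 * Sm <= 0).
  { replace (2*Sm) with (Sm + Sm) by ring. rewrite Hs at 2. unfold Sm. rewrite <- sumR_plus.
    apply sumR_nonpos. intros i Hi. rewrite <- sumR_plus. apply sumR_nonpos. intros j Hj.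
    unfold h. rewrite (Hsym j i). destruct (adj i j) eqn:E; [|lra].
    destruct (HR i j E) as [Hp Heq]. rewrite <- Heq.
    replace (2 * (xs (3 * i)%nat * xs (3 * j)%nat - xs (3 * i)%nat * xs (3 * i)%nat) / Rl i j +
     2 * (xs (3 * j)%nat * xs (3 * i)%nat - xs (3 * j)%nat * xs (3 * j)%nat) / Rl i j)
     with (- (2 * ((xs (3 * i)%nat - xs (3*j)%nat) * (xs (3 * i)%nat - xs (3*j)%nat)) / Rl i j)) by (field; lra).
    assert (0 <= 2 * ((xs (3 * i)%nat - xs (3*j)%nat) * (xs (3 * i)%nat - xs (3*j)%nat)) / Rl i j).
    { apply Rmult_le_pos. assert (0 <= (xs (3 * i)%nat - xs (3*j)%nat) * (xs (3 * i)%nat - xs (3*j)%nat)) by apply Rle_0_sqr. lra.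
      apply Rlt_le, Rinv_0_lt_compat; lra. }
    lra. }
  lra.
Qed.

Lemma dminus f g x df dg : derivable_pt_lim f x df -> derivable_pt_lim g x dg ->
  derivable_pt_lim (fun s => f s - g s) x (df - dg).
Proof. intros. exact (derivable_pt_lim_minus f g x df dg H H0). Qed.

Lemma dWU C L Rt RL k1 k2 k3 fv fI fz t dv dI dz :
  derivable_pt_lim fv t dv -> derivable_pt_lim fI t dI -> derivable_pt_lim fz t dz ->
  derivable_pt_lim (fun s => WU C L Rt RL k1 k2 k3 (fv s) (fI s) (fz s)) t
   (2*C*fv t*dv + 2*(L/(1-k1))*fI t*dI + 2*(k3/(1-k1))*fz t*dz
    - 2*epsU C L Rt RL k1 k2 k3*L*(dz*fI t + fz t*dI)).
Proof.
  intros Hv HI Hz. unfold WU.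
  eapply dl_eq.
  - repeat first [eassumption | apply dminus | apply dplus | apply dmul | apply dconst].
  - cbv beta. ring.
Qed.

Lemma dexp_lin g t : derivable_pt_lim (fun s => exp (g * s)) t (exp (g * t) * g).
Proof.
  assert (H1 : derivable_pt_lim (fun s => g * s) t g).
  { eapply dl_eq. apply dmul. apply dconst. apply derivable_pt_lim_id. cbv beta; ring. }
  exact (derivable_pt_lim_comp (fun s => g * s) exp t g (exp (g*t)) H1 (derivable_pt_lim_exp _)).
Qed.

Lemma decay (W D : R -> R) g :
  (forall t, derivable_pt_lim W t (D t)) -> (forall t, D t <= - g * W t) ->
  forall t, 0 <= t -> W t * exp (g * t) <= W 0.
Proof.
  intros HW HD t Ht. destruct (Req_dec t 0) as [->|Hne].
  - rewrite Rmult_0_r, exp_0. lra.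
  - assert (Hd : forall c, 0 <= c <= t -> derivable_pt_lim (fun s => W s * exp (g*s)) c
       (D c * exp (g*c) + W c * (exp (g*c) * g))).
    { intros c _. eapply dl_eq. apply dmul. apply HW. apply dexp_lin. cbv beta; ring. }
    destruct (MVT_cor2 _ _ 0 t ltac:(lra) Hd) as [c [Hc Hct]].
    assert (D c * exp (g*c) + W c * (exp (g*c) * g) <= 0).
    { replace (D c * exp (g*c) + W c * (exp (g*c) * g)) with ((D c + g * W c) * exp (g*c)) by ring.
      assert (0 < exp (g*c)) by apply exp_pos. specialize (HD c). nra. }
    rewrite Rmult_0_r, exp_0 in Hc. assert (0 < t) by lra. nra.
Qed.

Theorem theorem1 (N : nat) (adj : nat -> nat -> bool)
  (Ct Lt Rt RL : nat -> R) (Rl : nat -> nat -> R) (k1 k2 k3 : nat -> R) :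
  (1 <= N)%nat ->
  simple_graph N adj ->
  connected N adj ->
  (forall i, (i < N)%nat -> 0 < Ct i /\ 0 < Lt i /\ 0 < Rt i /\ 0 < RL i) ->
  (forall i j, adj i j = true -> 0 < Rl i j /\ Rl i j = Rl j i) ->
  (forall i, (i < N)%nat -> k1 i < 1 /\ k2 i < Rt i /\ 0 < k3 i) ->
  asymptotically_stable (3 * N) (FC N adj Ct Lt Rt RL Rl k1 k2 k3).
Proof.
  intros HN Hg _ Hpos Hrl Hk.
  pose proof Hg as [Hsym [Hirr Hin]].
  assert (UB : forall i, (i < N)%nat -> _) by
    (intros i Hi; destruct (Hpos i Hi) as (a1 & a2 & a3 & a4); destruct (Hk i Hi) as (b1 & b2 & b3);
     exact (unit_bounds (Ct i) (Lt i) (Rt i) (RL i) (k1 i) (k2 i) (k3 i) a1 a2 a4 b1 b2 b3)).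
  set (au := fun i => alphaU (Ct i) (Lt i) (Rt i) (RL i) (k1 i) (k2 i) (k3 i)).
  set (bu := fun i => betaU (Ct i) (Lt i) (Rt i) (RL i) (k1 i) (k2 i) (k3 i)).
  set (cu := fun i => cU (Ct i) (Lt i) (Rt i) (RL i) (k1 i) (k2 i) (k3 i)).
  set (al := minR N au). set (be := maxR N bu). set (ga := minR N (fun i => cu i / bu i)).
  assert (Hal : 0 < al) by (apply minR_pos; intros i Hi; apply (UB i Hi)).
  assert (Hbe : 0 < be) by apply maxR_pos.
  assert (Hga : 0 < ga).
  { apply minR_pos; intros i Hi. destruct (UB i Hi) as (_ & h2 & h3 & _). apply Rdiv_lt_0_compat; auto. }
  set (nrm := fun (x : R -> nat -> R) t => sumR N (fun i => x t (3*i)%nat ^ 2 + x t (3*i+1)%nat ^ 2 + x t (3*i+2)%nat ^ 2)).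
  assert (Hnrm0 : forall x t, 0 <= nrm x t).
  { intros x t. unfold nrm. rewrite <- (sumR_zero N). apply sumR_le. intros i _.
    assert (0 <= x t (3*i)%nat ^ 2) by apply pow2_ge_0.
    assert (0 <= x t (3*i+1)%nat ^ 2) by apply pow2_ge_0.
    assert (0 <= x t (3*i+2)%nat ^ 2) by apply pow2_ge_0. lra. }
  assert (Hvn : forall x t, vnorm (3*N) (x t) = sqrt (nrm x t)).
  { intros x t. unfold vnorm. rewrite sum3. reflexivity. }
  assert (KEY : forall x, is_solution (3*N) (FC N adj Ct Lt Rt RL Rl k1 k2 k3) x ->
            forall t, 0 <= t -> al * nrm x t * exp (ga * t) <= be * nrm x 0).
  { intros x Hsol.
    set (WW := fun t => sumR N (fun i => WU (Ct i) (Lt i) (Rt i) (RL i) (k1 i) (k2 i) (k3 i)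
                  (x t (3*i)%nat) (x t (3*i+1)%nat) (x t (3*i+2)%nat))).
    set (rs := fun t k => rowsum N adj Ct Lt Rt RL Rl k1 k2 k3 (x t) k).
    set (DD := fun t => sumR N (fun i =>
       2*Ct i*x t (3*i)%nat*rs t (3*i)%nat + 2*(Lt i/(1-k1 i))*x t (3*i+1)%nat*rs t (3*i+1)%nat
       + 2*(k3 i/(1-k1 i))*x t (3*i+2)%nat*rs t (3*i+2)%nat
       - 2*epsU (Ct i) (Lt i) (Rt i) (RL i) (k1 i) (k2 i) (k3 i)*Lt i*(rs t (3*i+2)%nat*x t (3*i+1)%nat + x t (3*i+2)%nat*rs t (3*i+1)%nat))).
    assert (HW : forall t, derivable_pt_lim WW t (DD t)).
    { intros t. unfold WW, DD. apply dsum. intros i Hi. apply dWU; apply Hsol; lia. }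
    assert (HD : forall t, DD t <= - ga * WW t).
    { intros t. unfold DD.
      rewrite (sumR_ext _ _ (fun i => QU (Ct i) (Lt i) (Rt i) (RL i) (k1 i) (k2 i) (k3 i)
                  (x t (3*i)%nat) (x t (3*i+1)%nat) (x t (3*i+2)%nat)
                 + 2 * Ct i * x t (3*i)%nat * (- Sdeg N adj Ct Rl i * x t (3*i)%nat + Tcpl N adj Ct Rl (x t) i))).
      2:{ intros i Hi. unfold rs. rewrite (row0 N adj Ct Lt Rt RL Rl k1 k2 k3 Hirr (x t) i Hi),
            (row1 N adj Ct Lt Rt RL Rl k1 k2 k3 Hirr (x t) i Hi), (row2 N adj Ct Lt Rt RL Rl k1 k2 k3 Hirr (x t) i Hi).
          unfold QU, dIU. destruct (Hpos i Hi) as (a1 & a2 & a3 & a4). destruct (Hk i Hi) as (b1 & b2 & b3). field. repeat split; lra. }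
      rewrite sumR_plus.
      assert (Hc := coupling N adj Ct Rl (x t) Hg (fun i Hi => proj1 (Hpos i Hi)) Hrl).
      assert (sumR N (fun i => QU (Ct i) (Lt i) (Rt i) (RL i) (k1 i) (k2 i) (k3 i)
                  (x t (3*i)%nat) (x t (3*i+1)%nat) (x t (3*i+2)%nat)) <= - ga * WW t).
      { unfold WW. rewrite <- sumR_scal. apply sumR_le. intros i Hi.
        destruct (UB i Hi) as (h1 & h2 & h3 & h4).
        destruct (h4 (x t (3*i)%nat) (x t (3*i+1)%nat) (x t (3*i+2)%nat)) as (l1 & l2 & l3).
        assert (Hgi : ga <= cu i / bu i) by (apply (minR_le N (fun i => cu i / bu i)); auto).
        assert (Hgb : ga * bu i <= cu i).
        { apply (Rmult_le_compat_r (bu i)) in Hgi; [|unfold bu; lra].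
          replace (cu i / bu i * bu i) with (cu i) in Hgi by (field; unfold bu; lra). exact Hgi. }
        fold (cu i) (bu i) in *. set (n := x t (3*i)%nat ^ 2 + x t (3*i+1)%nat ^ 2 + x t (3*i+2)%nat ^ 2) in *.
        assert (0 <= n) by (unfold n; assert (0 <= x t (3*i)%nat ^ 2) by apply pow2_ge_0;
           assert (0 <= x t (3*i+1)%nat ^ 2) by apply pow2_ge_0; assert (0 <= x t (3*i+2)%nat ^ 2) by apply pow2_ge_0; lra).
        assert (ga * bu i * n <= cu i * n) by (apply Rmult_le_compat_r; lra).
        assert (ga * WU (Ct i) (Lt i) (Rt i) (RL i) (k1 i) (k2 i) (k3 i) (x t (3*i)%nat) (x t (3*i+1)%nat) (x t (3*i+2)%nat)
                 <= ga * (bu i * n)) by (apply Rmult_le_compat_l; lra).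
        lra. }
      lra. }
    intros t Ht.
    pose proof (decay WW DD ga HW HD t Ht) as Hdec.
    assert (Hlo : al * nrm x t <= WW t).
    { unfold nrm, WW. rewrite <- sumR_scal. apply sumR_le. intros i Hi.
      destruct (UB i Hi) as (h1 & h2 & h3 & h4).
      destruct (h4 (x t (3*i)%nat) (x t (3*i+1)%nat) (x t (3*i+2)%nat)) as (l1 & l2 & l3).
      assert (al <= au i) by (apply minR_le; auto).
      set (n := x t (3*i)%nat ^ 2 + x t (3*i+1)%nat ^ 2 + x t (3*i+2)%nat ^ 2) in *.
      assert (0 <= n) by (unfold n; assert (0 <= x t (3*i)%nat ^ 2) by apply pow2_ge_0;
           assert (0 <= x t (3*i+1)%nat ^ 2) by apply pow2_ge_0; assert (0 <= x t (3*i+2)%nat ^ 2) by apply pow2_ge_0; lra).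
      assert (al * n <= au i * n) by (apply Rmult_le_compat_r; lra). unfold au in *. lra. }
    assert (Hup : WW 0 <= be * nrm x 0).
    { unfold nrm, WW. rewrite <- sumR_scal. apply sumR_le. intros i Hi.
      destruct (UB i Hi) as (h1 & h2 & h3 & h4).
      destruct (h4 (x 0 (3*i)%nat) (x 0 (3*i+1)%nat) (x 0 (3*i+2)%nat)) as (l1 & l2 & l3).
      assert (bu i <= be) by (apply maxR_ge; auto).
      set (n := x 0 (3*i)%nat ^ 2 + x 0 (3*i+1)%nat ^ 2 + x 0 (3*i+2)%nat ^ 2) in *.
      assert (0 <= n) by (unfold n; assert (0 <= x 0 (3*i)%nat ^ 2) by apply pow2_ge_0;
           assert (0 <= x 0 (3*i+1)%nat ^ 2) by apply pow2_ge_0; assert (0 <= x 0 (3*i+2)%nat ^ 2) by apply pow2_ge_0; lra).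
      assert (bu i * n <= be * n) by (apply Rmult_le_compat_r; lra). unfold bu in *. lra. }
    assert (0 < exp (ga * t)) by apply exp_pos.
    assert (al * nrm x t * exp (ga * t) <= WW t * exp (ga * t)) by (apply Rmult_le_compat_r; lra).
    lra. }
  split.
  - intros eps Heps.
    assert (Hq : 0 < eps*eps*al/be) by (apply Rdiv_lt_0_compat; [repeat apply Rmult_lt_0_compat|]; lra).
    exists (sqrt (eps*eps*al/be)). split; [apply sqrt_lt_R0; lra|].
    intros x Hsol H0 t Ht. rewrite Hvn in *.
    apply sqrt_lt_0_alt in H0.
    pose proof (KEY x Hsol t Ht) as Hk1.
    assert (1 <= exp (ga*t)) by (pose proof (exp_ineq1_le (ga*t)); nra).
    pose proof (Hnrm0 x t). pose proof (Hnrm0 x 0).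
    assert (0 <= al * nrm x t) by (apply Rmult_le_pos; lra).
    assert (al * nrm x t * 1 <= al * nrm x t * exp (ga*t)) by (apply Rmult_le_compat_l; lra).
    assert (be * nrm x 0 < be * (eps*eps*al/be)) by (apply Rmult_lt_compat_l; lra).
    replace (be * (eps*eps*al/be)) with (al * (eps*eps)) in * by (field; lra).
    assert (nrm x t < eps*eps) by nra.
    rewrite <- (sqrt_square eps) by lra. apply sqrt_lt_1_alt. lra.
  - exists 1. split; [lra|]. intros x Hsol _ eps Heps.
    pose proof (Hnrm0 x 0) as Hn0.
    set (m := eps*eps*al/(be*(nrm x 0 + 1))).
    assert (Hm : 0 < m) by (unfold m; apply Rdiv_lt_0_compat; [repeat apply Rmult_lt_0_compat|apply Rmult_lt_0_compat]; lra).
    exists (Rmax 0 (- ln m / ga)). intros t Ht.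
    assert (Ht0 : 0 <= t) by (eapply Rle_trans; [apply Rmax_l|exact Ht]).
    assert (Ht1 : - ln m / ga <= t) by (eapply Rle_trans; [apply Rmax_r|exact Ht]).
    assert (Hgt : - ln m <= ga * t).
    { apply (Rmult_le_compat_l ga) in Ht1; [|lra]. replace (ga * (- ln m / ga)) with (- ln m) in Ht1 by (field; lra). exact Ht1. }
    assert (He : / m <= exp (ga * t)).
    { rewrite <- (exp_ln m) by lra. rewrite <- exp_Ropp. destruct Hgt as [Hlt|Heq].
      left; apply exp_increasing; exact Hlt. rewrite Heq; lra. }
    pose proof (KEY x Hsol t Ht0) as Hk1. pose proof (Hnrm0 x t) as Hnt.
    assert (al * nrm x t * / m <= al * nrm x t * exp (ga*t)) by (apply Rmult_le_compat_l; nra).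
    assert (al * nrm x t <= be * nrm x 0 * m).
    { assert (Hx : al * nrm x t * / m * m <= be * nrm x 0 * m) by (apply Rmult_le_compat_r; lra).
      replace (al * nrm x t * / m * m) with (al * nrm x t) in Hx by (field; lra). exact Hx. }
    assert (Hbm : be * nrm x 0 * m = al * (eps*eps) * (nrm x 0 / (nrm x 0 + 1))) by (unfold m; field; lra).
    assert (nrm x 0 / (nrm x 0 + 1) < 1).
    { apply (Rmult_lt_reg_r (nrm x 0 + 1)); [lra|]. replace (nrm x 0 / (nrm x 0 + 1) * (nrm x 0 + 1)) with (nrm x 0) by (field; lra). lra. }
    assert (0 < al * (eps*eps)) by (apply Rmult_lt_0_compat; nra).
    assert (al * nrm x t < al * (eps*eps)) by nra.
    assert (nrm x t < eps*eps) by nra.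
    rewrite Hvn. rewrite <- (sqrt_square eps) by lra. apply sqrt_lt_1_alt. lra.
Qed.
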